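(* Let $X$ be an infinite-dimensional Banach space over $\mathbb{K}\in\{\mathbb{R},\mathbb{C}\}$, let $\varepsilon>0$, $n\in\mathbb{N}$, and $\varphi_1,\dots,\varphi_n\in X^*\setminus\{0\}$, and put $A=\{x\in X: |\varphi_i(x)|<\varepsilon\text{ for all }i=1,\dots,n\}$. Then: (i) $\dim\big(\bigcap_{i=1}^n\ker\varphi_i\big)=\dim X$, and every linear subspace $W\subset A$ with $\dim W<\dim X$ satisfies $W\subset\bigcap_{i=1}^n\ker\varphi_i$; consequently, for every cardinal $\alpha<\dim X$, $A$ is $(\alpha,\dim X)$-spaceable (with respect to the norm topology). (ii) There exists $x\in A$ such that no linear subspace $W$ of $X$ satisfies $x\in W\subset A\cup\{0\}$; in particular $A$ is not pointwise lineable (hence not pointwise spaceable).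
   Context: $X^*$ denotes the topological dual of $X$; $\dim$ denotes algebraic (Hamel) dimension. For a vector space $V$ and a cardinal $\alpha$, a subset $A\subset V$ is $\alpha$-lineable if $A\cup\{0\}$ contains a linear subspace of dimension $\alpha$. For cardinals $\alpha<\beta\le\dim V$, $A$ is $(\alpha,\beta)$-spaceable if $A$ is $\alpha$-lineable and for every linear subspace $W_\alpha\subset A\cup\{0\}$ with $\dim W_\alpha=\alpha$ there is a closed linear subspace $W_\beta$ with $\dim W_\beta=\beta$ and $W_\alpha\subset W_\beta\subset A\cup\{0\}$. $A$ is pointwise lineable if for each $x\in A$ there is an infinite-dimensional linear subspace $W_x$ with $x\in W_x\subset A\cup\{0\}$; pointwise spaceable is the same with $W_x$ required to be closed. *)

(* Defs.v *)
From mathcomp Require Import all_boot all_order all_algebra.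
From mathcomp Require Import all_classical all_reals all_analysis.
From mathcomp Require Export complex.
Export numFieldNormedType.Exports.
Set Implicit Arguments.
Unset Strict Implicit.
Unset Printing Implicit Defensive.
Import Order.TTheory GRing.Theory Num.Theory.
Local Open Scope classical_set_scope.
Local Open Scope ring_scope.

Section LinAlg.
Context {K : numFieldType} {V : lmodType K}.

Definition lsubspace (W : set V) : Prop :=
  W 0 /\ forall (a : K) (x y : V), W x -> W y -> W (a *: x + y).

Definition lspan (B : set V) : set V :=
  [set x | exists (s : seq V) (c : V -> K),
     (forall v, v \in s -> B v) /\ x = \sum_(v <- s) c v *: v].

Definition lin_indep (B : set V) : Prop :=
  forall (s : seq V) (c : V -> K), uniq s -> (forall v, v \in s -> B v) ->
    \sum_(v <- s) c v *: v = 0 -> forall v, v \in s -> c v = 0.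

Definition hamel_basis (W B : set V) : Prop :=
  B `<=` W /\ lin_indep B /\ lspan B = W.

Definition dim_is (W : set V) {T : Type} (S : set T) : Prop :=
  exists B, hamel_basis W B /\ (B #= S)%card.

Definition dim_eq (W W' : set V) : Prop :=
  exists B B', hamel_basis W B /\ hamel_basis W' B' /\ (B #= B')%card.

Definition dim_lt (W W' : set V) : Prop :=
  exists B B', hamel_basis W B /\ hamel_basis W' B' /\
    (B #<= B')%card /\ ~ (B' #<= B)%card.

Definition finite_dim (W : set V) : Prop :=
  exists s : seq V, lspan [set v | v \in s] = W.

Definition infinite_dim (W : set V) : Prop := ~ finite_dim W.

(* A is alpha-lineable, alpha = |S| *)
Definition lineable (A : set V) {T : Type} (S : set T) : Prop :=
  exists W, lsubspace W /\ W `<=` A `|` [set 0] /\ dim_is W S.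

Definition pointwise_lineable (A : set V) : Prop :=
  forall x, A x -> exists W, lsubspace W /\ infinite_dim W /\ W x /\
    W `<=` A `|` [set 0].
End LinAlg.

Section Top.
Context {K : numFieldType} {V : normedModType K}.

(* (alpha, beta)-spaceable with alpha = |S|, beta = |S'| *)
Definition spaceable (A : set V) {T T' : Type} (S : set T) (S' : set T') : Prop :=
  lineable A S /\
  forall W, lsubspace W -> W `<=` A `|` [set 0] -> dim_is W S ->
    exists W', lsubspace W' /\ closed W' /\ dim_is W' S' /\
      W `<=` W' /\ W' `<=` A `|` [set 0].

Definition pointwise_spaceable (A : set V) : Prop :=
  forall x, A x -> exists W, lsubspace W /\ closed W /\ infinite_dim W /\ W x /\
    W `<=` A `|` [set 0].
End Top.

Definition is_dual {K : numFieldType} {X : normedModType K} (f : X -> K^o) : Prop :=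
  (forall (a : K) (x y : X), f (a *: x + y) = a * f x + f y) /\ continuous f.

Definition thm4_stmt (K : numFieldType) (X : completeNormedModType K) : Prop :=
  infinite_dim [set: X] ->
  forall (eps : K) (n : nat) (phi : 'I_n -> X -> K^o),
    0 < eps -> (0 < n)%N ->
    (forall i, is_dual (phi i)) ->
    (forall i, phi i <> (fun _ => 0)) ->
    let A : set X := [set x | forall i, `|phi i x| < eps] in
    let Ker : set X := [set x | forall i, phi i x = 0] in
    (dim_eq Ker [set: X] /\
     (forall W : set X, lsubspace W -> W `<=` A -> dim_lt W [set: X] -> W `<=` Ker) /\
     (forall (T : Type) (S : set T) (BX : set X),
        hamel_basis [set: X] BX -> (S #<= BX)%card -> ~ (BX #<= S)%card ->
        spaceable A S BX))
    /\
    ((exists x, A x /\ forall W : set X, lsubspace W -> W x -> ~ (W `<=` A `|` [set 0])) /\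
     ~ pointwise_lineable A /\ ~ pointwise_spaceable A).

(* Main.v *)
Require Import Defs.
From mathcomp Require Import all_boot all_order all_algebra.
From mathcomp Require Import all_classical all_reals all_analysis.
From mathcomp Require Import complex.
Set Implicit Arguments.
Unset Strict Implicit.
Unset Printing Implicit Defensive.
Import Order.TTheory GRing.Theory Num.Theory.
Import numFieldNormedType.Exports.
Local Open Scope classical_set_scope.
Local Open Scope ring_scope.
Section LA.
Context {K : numFieldType} {V : lmodType K}.
Implicit Types (B W : set V).

Lemma sub_add W x y : lsubspace W -> W x -> W y -> W (x + y).
Proof. by move=> [W0 WL] Wx Wy; have := WL 1 x y Wx Wy; rewrite scale1r. Qed.

Lemma sub_scale W a x : lsubspace W -> W x -> W (a *: x).
Proof. by move=> [W0 WL] Wx; have := WL a x 0 Wx W0; rewrite addr0. Qed.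

Lemma sub_sum W (I : eqType) (s : seq I) (F : I -> V) :
  lsubspace W -> (forall i, i \in s -> W (F i)) -> W (\sum_(i <- s) F i).
Proof.
move=> WS; elim: s => [|a s IH] Hs; first by rewrite big_nil; case: WS.
rewrite big_cons; apply: sub_add => //; first by apply: Hs; rewrite inE eqxx.
by apply: IH => i si; apply: Hs; rewrite inE si orbT.
Qed.

Lemma sum_undup (s : seq V) (c : V -> K) :
  \sum_(v <- s) c v *: v = \sum_(v <- undup s) (c v *+ count_mem v s) *: v.
Proof.
rewrite -big_undup_iterop_count; apply: eq_bigr => v _.
rewrite -scalerMnl Monoid.iteropE; elim: (count_mem v s) => [|k IH] //=.
by rewrite IH mulrS.
Qed.

Lemma sum_extend (s t : seq V) (c : V -> K) :
  uniq s -> uniq t -> {subset s <= t} ->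
  \sum_(v <- s) c v *: v = \sum_(v <- t) (if v \in s then c v else 0) *: v.
Proof.
move=> us ut st.
have -> : \sum_(v <- t) (if v \in s then c v else 0) *: v =
          \sum_(v <- t | v \in s) c v *: v.
  by rewrite [RHS]big_mkcond; apply: eq_bigr => v _; case: ifP => //; rewrite scale0r.
rewrite -[RHS]big_filter; apply: perm_big; apply: uniq_perm => //.
  exact: filter_uniq.
by move=> v; rewrite mem_filter; case vs: (v \in s) => //=; rewrite st.
Qed.

Lemma lspan_uniq B x : lspan B x <->
  exists (s : seq V) (c : V -> K), uniq s /\ (forall v, v \in s -> B v) /\
    x = \sum_(v <- s) c v *: v.
Proof.
split; last by move=> [s [c [_ [H1 H2]]]]; exists s, c.
move=> [s [c [Hs ->]]]; exists (undup s), (fun v => c v *+ count_mem v s).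
split; first exact: undup_uniq.
split; last exact: sum_undup.
by move=> v; rewrite mem_undup; apply: Hs.
Qed.

Lemma lspan_lsub B : lsubspace (lspan B).
Proof.
split; first by exists [::], (fun _ => 0); split => //; rewrite big_nil.
move=> a x y /lspan_uniq [s1 [c1 [u1 [H1 ->]]]] /lspan_uniq [s2 [c2 [u2 [H2 ->]]]].
exists (undup (s1 ++ s2)),
  (fun v => a * (if v \in s1 then c1 v else 0) + (if v \in s2 then c2 v else 0)).
split.
  by move=> v; rewrite mem_undup mem_cat => /orP [/H1|/H2].
have ut := undup_uniq (s1 ++ s2).
rewrite (sum_extend c1 u1 ut); last by move=> v vs; rewrite mem_undup mem_cat vs.
rewrite (sum_extend c2 u2 ut); last by move=> v vs; rewrite mem_undup mem_cat vs orbT.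
rewrite scaler_sumr -big_split /=; apply: eq_bigr => v _.
by rewrite scalerDl scalerA.
Qed.

Lemma lspan_sub B : B `<=` lspan B.
Proof.
move=> v Bv; exists [:: v], (fun _ => 1); split.
  by move=> w; rewrite inE => /eqP ->.
by rewrite big_cons big_nil addr0 scale1r.
Qed.

Lemma lspan_min B W : lsubspace W -> B `<=` W -> lspan B `<=` W.
Proof.
move=> WS BW x [s [c [Hs ->]]]; apply: sub_sum => // v vs.
by apply: sub_scale => //; apply: BW; apply: Hs.
Qed.

Lemma lin_indep_sub B B' : B' `<=` B -> lin_indep B -> lin_indep B'.
Proof. by move=> BB' HB s c us Hs; apply: HB => // v /Hs /BB'. Qed.

End LA.
Local Open Scope card_scope.

Lemma card_remove1 (T : pointedType) (A : set T) (x : T) :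
  infinite_set A -> A #<= A `\ x.
Proof.
move=> Ainf.
have /infiniteP /pcard_leP [e'] := infinite_setD Ainf (finite_set1 x).
have [e efun einj] : exists2 e : nat -> T, set_fun [set: nat] (A `\ x) e &
     set_inj [set: nat] e by apply/injfunPex; squash e'.
pose h (a : T) := if pselect (a = x) is left _ then e 0%N else
  if pselect (exists k, e k = a) is left H then e (projT1 (cid H)).+1 else a.
apply/pcard_leP/injfunPex; exists h.
- move=> a Aa; rewrite /h; case: pselect => [_|ax]; first exact: efun.
  case: pselect => [H|_]; first exact: efun.
  by split.
- have eI k l : e k = e l -> k = l by move=> /einj; apply; rewrite in_setE.
  move=> a b Aa Ab; rewrite /h.
  case: (pselect (a = x)) => [->|ax]; case: (pselect (b = x)) => [->|bx] //.
  + case: (pselect (exists k, e k = b)) => [H|nH]; first by move=> /eI.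
    by move=> e0b; exfalso; apply: nH; exists 0%N.
  + case: (pselect (exists k, e k = a)) => [H|nH]; first by move=> /eI.
    by move=> e0a; exfalso; apply: nH; exists 0%N.
  case: (pselect (exists k, e k = a)) => [H1|nH];
    case: (pselect (exists k, e k = b)) => [H2|nH'].
  + case: cid => /= k' <-; case: cid => /= l' <- /eI [->] //.
  + case: cid => /= k' <- ekb; exfalso; apply: nH'; by exists k'.+1.
  + case: cid => /= l' <- eal; exfalso; apply: nH; by exists l'.+1.
  + by [].
Qed.

Lemma card_removeseq (T : pointedType) (A : set T) (s : seq T) :
  infinite_set A -> A `\` [set` s] #= A.
Proof.
move=> Ainf; rewrite card_eq_le card_le_setD /=.
elim: s => [|x s IH].
  by apply: subset_card_le => a Aa; split => //.
apply: (card_le_trans IH).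
have -> : A `\` [set` (x :: s)] = (A `\` [set` s]) `\ x.
  apply/seteqP; split => a /=; rewrite inE.
    by move=> [Aa /negP]; rewrite negb_or => /andP[/eqP ? /negP ?].
  by move=> [[Aa sa] /eqP xa]; split => //; apply/negP; rewrite negb_or xa /=; apply/negP.
apply: card_remove1; exact: infinite_setD.
Qed.
Section Basis.
Context {K : numFieldType} {V : lmodType K}.

Lemma chain_seq (F : set (set V)) (s : seq V) :
  total_on F subset -> (forall v, v \in s -> (\bigcup_(X in F) X) v) ->
  s = [::] \/ exists2 X, F X & forall v, v \in s -> X v.
Proof.
move=> tot; elim: s => [|x s IH] Hs; first by left.
right; have [X1 FX1 X1x] := Hs x (mem_head _ _).
have [->|[X2 FX2 HX2]] := IH (fun v vs => Hs v (@mem_behead _ (x :: s) v vs)).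
  by exists X1 => // v; rewrite inE => /eqP ->.
have [S12|S21] := tot _ _ FX1 FX2.
  exists X2 => // v; rewrite inE => /orP [/eqP ->|]; [exact: S12| exact: HX2].
exists X1 => // v; rewrite inE => /orP [/eqP -> //|/HX2]; exact: S21.
Qed.

Lemma exists_basis : exists B : set V, hamel_basis [set: V] B.
Proof.
have [A [PA maxA]] : exists A : set V, lin_indep A /\
    forall B, A `<` B -> ~ lin_indep B.
  apply: Zorn_bigcup => F FP tot s c us Hs.
  have [->|[X FX HX]] := chain_seq tot Hs; first by [].
  exact: (FP X FX s c us HX).
exists A; split => //; split => //.
apply/seteqP; split => // x _.
apply: contrapT => nx.
have xA : ~ A x by move=> Ax; apply: nx; exact: lspan_sub.
apply: (maxA (A `|` [set x])).
  split; first by move=> v Av; left.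
  by move=> H; apply: xA; exact: (H x (or_intror erefl)).
move=> s c us Hs sum0.
have HA : forall v, v \in s -> v != x -> A v.
  by move=> v vs vx; have [//|/= vx'] := Hs v vs; rewrite vx' eqxx in vx.
have sum' : \sum_(v <- s | v != x) c v *: v =
            \sum_(v <- [seq v <- s | v != x]) c v *: v by rewrite big_filter.
have indep' : forall v, v \in s -> v != x -> c v = 0.
  case xs: (x \in s); last first.
    move=> v vs vx; apply: (PA s c us _ sum0 v vs).
    move=> w ws; apply: HA => //; apply: contraFN xs => /eqP <-; done.
  move: sum0; rewrite (bigD1_seq x) //= => sum0.
  case cx: (c x == 0); last first.
    exfalso; apply: nx.
    have -> : x = - (c x)^-1 *: \sum_(v <- s | v != x) c v *: v.
      apply: (@scalerI _ _ (c x)); first by rewrite cx.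
      rewrite scalerA mulrN mulfV ?cx // scaleN1r.
      by apply/eqP; rewrite -subr_eq0 opprK; apply/eqP.
    apply: sub_scale; first exact: lspan_lsub.
    rewrite sum'; apply: sub_sum; first exact: lspan_lsub.
    move=> v; rewrite mem_filter => /andP [vx vs].
    by apply: sub_scale; [exact: lspan_lsub | apply: lspan_sub; apply: HA].
  move: sum0; rewrite (eqP cx) scale0r add0r sum' => sum0 v vs vx.
  apply: (PA _ c (filter_uniq _ us) _ sum0); last by rewrite mem_filter vx.
  by move=> w; rewrite mem_filter => /andP [wx ws]; apply: HA.
move=> v vs; case vx: (v == x); last by apply: indep' => //; rewrite vx.
move/eqP: vx => vx; subst v.
have : \sum_(v <- s | v != x) c v *: v = 0.
  rewrite sum'; rewrite big_seq_cond big1 // => v /andP [].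
  by rewrite mem_filter => /andP [wx ws] _; rewrite indep' // scale0r.
move: sum0; rewrite (bigD1_seq x) //= => sum0 H0; move: sum0.
rewrite H0 addr0 => /eqP; rewrite scaler_eq0 => /orP [/eqP //|/eqP x0].
exfalso; apply: nx; rewrite x0; exact: (proj1 (lspan_lsub A)).
Qed.
End Basis.
Section Lin.
Context {K : numFieldType}.
Definition linmap {U W : lmodType K} (f : U -> W) :=
  forall a x y, f (a *: x + y) = a *: f x + f y.

Context {U W : lmodType K} (f : U -> W) (hf : linmap f).
Lemma linmap0 : f 0 = 0.
Proof. have := hf 1 0 0; rewrite !scale1r addr0 => H; apply: (addrI (f 0)); by rewrite addr0 -H. Qed.
Lemma linmapD x y : f (x + y) = f x + f y.
Proof. by have := hf 1 x y; rewrite !scale1r. Qed.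
Lemma linmapZ a x : f (a *: x) = a *: f x.
Proof. by have := hf a x 0; rewrite !addr0 linmap0 addr0. Qed.
Lemma linmapN x : f (- x) = - f x.
Proof. by rewrite -scaleN1r linmapZ scaleN1r. Qed.
Lemma linmapB x y : f (x - y) = f x - f y.
Proof. by rewrite linmapD linmapN. Qed.
Lemma linmap_sum (I : Type) (s : seq I) (F : I -> U) :
  f (\sum_(i <- s) F i) = \sum_(i <- s) f (F i).
Proof.
elim: s => [|a s IH]; first by rewrite !big_nil linmap0.
by rewrite !big_cons linmapD IH.
Qed.
End Lin.
Section Construct.
Context {K : numFieldType} {X : normedModType K} (n : nat) (phi : 'I_n -> X -> K).
Hypothesis philin : forall i a x y, phi i (a *: x + y) = a * phi i x + phi i y.
Variable BX : set X.
Hypothesis BXb : hamel_basis [set: X] BX.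
Hypothesis BXinf : infinite_set BX.

Definition Phi (x : X) : 'rV[K]_n := \row_i phi i x.
Let Ker : set X := [set x | forall i, phi i x = 0].

Lemma Phi_lin : linmap Phi.
Proof. by move=> a x y; apply/rowP => i; rewrite !mxE philin. Qed.

Lemma KerP x : Ker x <-> Phi x = 0.
Proof.
split => [H|H i]; first by apply/rowP => i; rewrite !mxE H.
by have := congr1 (fun M : 'rV[K]_n => M 0 i) H; rewrite !mxE.
Qed.

Lemma Ker_lsub : lsubspace Ker.
Proof.
split; first by apply/KerP; exact: linmap0 Phi_lin.
move=> a x y /KerP Kx /KerP Ky; apply/KerP.
by rewrite Phi_lin Kx Ky scaler0 addr0.
Qed.

Lemma exists_maxseq : exists s : seq X, (forall v, v \in s -> BX v) /\
  free (map Phi s) /\ forall b, BX b -> Phi b \in <<map Phi s>>%VS.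
Proof.
pose P := fun m => `[< exists s : seq X, size s = m /\
   (forall v, v \in s -> BX v) /\ free (map Phi s) >].
have bnd (S : seq 'rV[K]_n) : free S -> (size S <= 1 * n)%N.
  move=> /eqP <-; apply: (leq_trans (dimvS (subvf _))); by rewrite dimvf dim_matrix.
have exP : exists m, P m.
  by exists 0%N; apply/asboolP; exists [::]; split => //; split => //; exact: nil_free.
have ubP : forall m, P m -> (m <= 1 * n)%N.
  by move=> m /asboolP [s [<- [_ fs]]]; rewrite -(size_map Phi); apply: bnd.
case: (ex_maxnP exP ubP) => m /asboolP [s [sm [sB fs]]] maxm.
exists s; split => //; split => // b Bb.
apply: contrapT => /negP nb.
have : P (size (b :: s)).
  apply/asboolP; exists (b :: s); split => //; split.
    by move=> v; rewrite inE => /orP [/eqP ->|/sB].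
  by rewrite map_cons free_cons nb fs.
by move=> /maxm; rewrite /= sm ltnn.
Qed.

Variable s : seq X.
Hypothesis sB : forall v, v \in s -> BX v.
Hypothesis fs : free (map Phi s).
Hypothesis spanP : forall b, BX b -> Phi b \in <<map Phi s>>%VS.

Let m := size (map Phi s).
Let Tu : m.-tuple 'rV[K]_n := in_tuple (map Phi s).
Definition cf (k : nat) (w : 'rV[K]_n) : K :=
  if (insub k : option 'I_m) is Some i then coord Tu i w else 0.

Lemma cf_lin k : linmap (cf k : 'rV[K]_n -> K^o).
Proof.
move=> a x y; rewrite /cf; case: insub => [i|]; last by rewrite scaler0 addr0.
by rewrite linearD linearZ.
Qed.

Definition Pj (x : X) : X := \sum_(v <- s) cf (index v s) (Phi x) *: v.
Definition Qj (x : X) : X := x - Pj x.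

Lemma us : uniq s.
Proof. exact: map_uniq (free_uniq fs). Qed.
Lemma Phi_all x : Phi x \in <<map Phi s>>%VS.
Proof.
have : lspan BX x by rewrite (proj2 (proj2 BXb)).
move=> [t [c [Ht ->]]]; rewrite linmap_sum; last exact: Phi_lin.
rewrite big_seq; apply: memv_suml => v vt; rewrite linmapZ; last exact: Phi_lin.
exact: memvZ (spanP (Ht v vt)).
Qed.

Lemma Tu_nth (i : 'I_m) : Tu`_i = Phi s`_i.
Proof.
by rewrite /Tu /= (nth_map 0) // -(size_map Phi).
Qed.

Lemma Pj_ord x : Pj x = \sum_(i < m) cf i (Phi x) *: s`_i.
Proof.
rewrite /Pj (big_nth 0) /m size_map big_mkord; apply: eq_bigr => i _.
by rewrite index_uniq // us.
Qed.

Lemma cf_ord (i : 'I_m) w : cf i w = coord Tu i w.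
Proof.
by rewrite /cf; case: insubP => [j _ /val_inj -> //|]; rewrite ltn_ord.
Qed.

Lemma Phi_Pj x : Phi (Pj x) = Phi x.
Proof.
rewrite Pj_ord linmap_sum; last exact: Phi_lin.
rewrite [RHS](@coord_span _ _ _ Tu (Phi x) (Phi_all x)); apply: eq_bigr => i _.
by rewrite linmapZ ?cf_ord ?Tu_nth //; exact: Phi_lin.
Qed.

Lemma Pj_Ker x : Ker x -> Pj x = 0.
Proof.
move=> /KerP Px; rewrite /Pj Px big1 // => v _.
by rewrite (linmap0 (cf_lin _)) scale0r.
Qed.

Lemma Pj_s v : v \in s -> Pj v = v.
Proof.
move=> vs; have vi : (index v s < m)%N by rewrite /m size_map index_mem.
pose j := Ordinal vi.
have -> : v = s`_j by rewrite /= nth_index.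
rewrite Pj_ord -Tu_nth (bigD1 j) // cf_ord coord_free // eqxx scale1r big1.
  by rewrite /= addr0.
by move=> i ij; rewrite cf_ord coord_free // eq_sym (negbTE ij) scale0r.
Qed.

Lemma Pj_lin : linmap Pj.
Proof.
move=> a x y; rewrite /Pj scaler_sumr -big_split /=; apply: eq_bigr => v _.
rewrite Phi_lin (cf_lin _ a) /=.
by rewrite scalerDl scalerA.
Qed.

Lemma Qj_lin : linmap Qj.
Proof.
move=> a x y; rewrite /Qj Pj_lin scalerBr.
by rewrite opprD !addrA; congr (_ + _); rewrite -!addrA; congr (_ + _); rewrite addrC.
Qed.

Lemma Qj_Ker x : Ker (Qj x).
Proof. by apply/KerP; rewrite /Qj (linmapB Phi_lin) Phi_Pj subrr. Qed.

Lemma Qj_id x : Ker x -> Qj x = x.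
Proof. by move=> Kx; rewrite /Qj Pj_Ker // subr0. Qed.

Lemma Qj_s v : v \in s -> Qj v = 0.
Proof. by move=> vs; rewrite /Qj Pj_s // subrr. Qed.
Lemma key (t : seq X) (e : X -> K) : uniq t -> (forall v, v \in t -> BX v) ->
  (forall v, v \in t -> v \notin s) ->
  Qj (\sum_(v <- t) e v *: v) = 0 -> forall v, v \in t -> e v = 0.
Proof.
move=> ut tB ts; set y := \sum_(v <- t) e v *: v => Qy.
pose d v := if v \in s then - cf (index v s) (Phi y) else e v.
have BXi := proj1 (proj2 BXb).
have sum0 : \sum_(v <- t ++ s) d v *: v = 0.
  rewrite big_cat /=.
  have -> : \sum_(v <- t) d v *: v = y.
    by rewrite /y big_seq_cond [RHS]big_seq_cond; apply: eq_bigr => v /andP [vt _];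
      rewrite /d (negbTE (ts v vt)).
  have -> : \sum_(v <- s) d v *: v = - Pj y.
    rewrite /Pj -sumrN big_seq_cond [RHS]big_seq_cond; apply: eq_bigr => v /andP [vs _].
    by rewrite /d vs scaleNr.
  by move: Qy; rewrite /Qj.
have uts : uniq (t ++ s).
  rewrite cat_uniq ut us andbT; apply/hasPn => v vs; apply/negP => vt.
  by move: (ts v vt); rewrite vs.
move=> v vt; have := BXi _ d uts _ sum0 v; rewrite mem_cat vt /d (negbTE (ts v vt)).
apply => //; move=> w; rewrite mem_cat => /orP [/tB //|/sB //].
Qed.

Definition Bk : set X := Qj @` (BX `\` [set` s]).

Lemma Qj_inj : {in BX `\` [set` s] &, injective Qj}.
Proof.
move=> a b; rewrite !in_setE => -[Ba sa] [Bb sb] Qab.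
apply: contrapT => ab.
have ab' : (a != b) by apply/eqP.
pose e v : K := if v == a then 1 else -1.
have := @key [:: a; b] e.
have -> : \sum_(v <- [:: a; b]) e v *: v = a - b.
  by rewrite !big_cons big_nil addr0 /e eqxx eq_sym (negbTE ab') scale1r scaleN1r.
move=> /(_ _ _ _ _ a) H.
suff : e a = 0 by rewrite /e eqxx => /eqP; rewrite oner_eq0.
apply: H.
- by rewrite /= inE ab'.
- by move=> v; rewrite !inE => /orP [/eqP -> //|/eqP -> //].
- by move=> v; rewrite !inE => /orP [/eqP ->|/eqP ->]; apply/negP.
- by rewrite (linmapB Qj_lin) Qab subrr.
- by rewrite mem_head.
Qed.

Lemma Bk_basis : hamel_basis Ker Bk.
Proof.
have BXs := proj2 (proj2 BXb).
split; first by move=> _ [b _ <-]; exact: Qj_Ker.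
split.
  move=> t' c ut' tB sum0.
  have : forall w, exists b, Bk w -> BX b /\ b \notin s /\ Qj b = w.
    move=> w; case: (pselect (Bk w)) => [[b [Bb sb] <-]|nw]; last by exists w.
    by exists b => _; split => //; split => //; apply/negP.
  move=> /choice [g Hg].
  have gi : {in t' &, injective g}.
    move=> w1 w2 w1t w2t gw.
    by rewrite -(proj2 (proj2 (Hg w1 (tB _ w1t)))) gw (proj2 (proj2 (Hg w2 (tB _ w2t)))).
  have := @key (map g t') (fun v => c (Qj v)).
  move=> /(_ _ _ _ _) H w wt.
  have := H _ _ _ _ (g w); rewrite (proj2 (proj2 (Hg w (tB _ wt)))); apply.
  - by rewrite map_inj_in_uniq.
  - by move=> v /mapP [w' w't ->]; exact: (proj1 (Hg w' (tB _ w't))).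
  - by move=> v /mapP [w' w't ->]; exact: (proj1 (proj2 (Hg w' (tB _ w't)))).
  - rewrite linmap_sum; last exact: Qj_lin.
    rewrite big_map -[RHS]sum0 big_seq [RHS]big_seq; apply: eq_bigr => v vt.
    by rewrite (linmapZ Qj_lin) (proj2 (proj2 (Hg v (tB _ vt)))).
  - by apply/mapP; exists w.
apply/seteqP; split.
  apply: lspan_min; first exact: Ker_lsub.
  by move=> _ [b _ <-]; exact: Qj_Ker.
move=> x Kx.
have : lspan BX x by rewrite BXs.
move=> [t [c [Ht xe]]].
rewrite -(Qj_id Kx) xe linmap_sum; last exact: Qj_lin.
apply: sub_sum; first exact: lspan_lsub.
move=> v vt; rewrite (linmapZ Qj_lin); apply: sub_scale; first exact: lspan_lsub.
case vs: (v \in s); first by rewrite Qj_s //; exact: (proj1 (lspan_lsub _)).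
apply: lspan_sub; exists v => //; split; [exact: Ht | by rewrite /= vs].
Qed.

Lemma Bk_card : (Bk #= BX)%card.
Proof.
apply: card_eq_trans (card_removeseq s BXinf).
exact: inj_card_eq Qj_inj.
Qed.
End Construct.
Section Main.
Context {K : numFieldType} {X : completeNormedModType K}.

Lemma basis_infinite (BX : set X) : infinite_dim [set: X] ->
  hamel_basis [set: X] BX -> infinite_set BX.
Proof.
move=> Xinf [_ [_ Hs]] /finite_seqP [s BXs]; apply: Xinf; exists s.
by rewrite -Hs BXs.
Qed.

Lemma kerbasis n (phi : 'I_n -> X -> K)
  (philin : forall i a x y, phi i (a *: x + y) = a * phi i x + phi i y)
  (BX : set X) : hamel_basis [set: X] BX -> infinite_set BX ->
  exists B, hamel_basis [set x | forall i, phi i x = 0] B /\ (B #= BX)%card.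
Proof.
move=> BXb BXinf.
have [s [sB [fs spanP]]] := exists_maxseq phi BX.
exists (Bk phi BX s); split; first exact: (Bk_basis philin BXb sB fs spanP).
exact: (Bk_card philin BXb BXinf sB fs).
Qed.

Theorem thm4_gen : thm4_stmt X.
Proof.
move=> Xinf eps n phi eps0 n0 dual nz A Ker.
have philin : forall i a x y, phi i (a *: x + y) = a * phi i x + phi i y.
  by move=> i; case: (dual i).
have phi0 i : phi i 0 = 0.
  by have := philin i 1 0 0; rewrite scale1r addr0 mul1r => H; apply: (addrI (phi i 0)); rewrite addr0 -H.
have KerA : Ker `<=` A.
  by move=> x Kx i; rewrite Kx normr0.
have KerL : lsubspace Ker by exact: (Ker_lsub philin).
have subKer : forall W : set X, lsubspace W -> W `<=` A -> W `<=` Ker.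
  move=> W WL WA w Ww i; apply: contrapT => /eqP nz0.
  have := WA _ (sub_scale (eps / phi i w) WL Ww) i.
  rewrite -[_ *: w]addr0 philin phi0 addr0 divfK // gtr0_norm //.
  by rewrite ltxx.
have [BX0 BX0b] := @exists_basis K X.
have BXinf := basis_infinite Xinf.
split.
  split.
    have [B [Bb Bc]] := kerbasis philin BX0b (BXinf _ BX0b).
    by exists B, BX0; split => //; split => //.
  split; first by move=> W WL WA _; exact: subKer.
  move=> T S BX BXb SBX _.
  have [B [Bb Bc]] := kerbasis philin BXb (BXinf _ BXb).
  split.
    have : (S #<= B)%card.
      apply: card_le_trans SBX _; by move: Bc; rewrite card_eq_le => /andP [].
    move=> /pcard_leP /injfunPex [f fS finj].
    exists (lspan (f @` S)); split; first exact: lspan_lsub.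
    split.
      have KerE : lspan B = Ker := proj2 (proj2 Bb).
      move=> x Hx; left; apply: KerA; rewrite -KerE.
      apply: lspan_min Hx; first exact: lspan_lsub.
      by move=> _ [y Sy <-]; apply: lspan_sub; exact: fS.
    exists (f @` S); split; last exact: inj_card_eq finj.
    split; first exact: lspan_sub.
    split => //; apply: lin_indep_sub (proj1 (proj2 Bb)).
    by move=> _ [y Sy <-]; exact: fS.
  move=> W WL WA _; exists Ker; split => //.
  split.
    rewrite (_ : Ker = \bigcap_(i in [set: 'I_n]) (phi i @^-1` [set 0])).
      apply: closed_bigI => i _; apply: preimage_closed.
        by move=> x _; case: (dual i).
      exact/accessible_closed_set1/hausdorff_accessible/norm_hausdorff.
    apply/seteqP; split => x Hx; first by move=> i _; exact: Hx i.
    by move=> i; exact: Hx i I.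
  split; first by exists B.
  split; last by move=> x /KerA; left.
  apply: subKer => // w Ww; have [//|->] := WA w Ww; exact: KerA (proj1 KerL).
have i0 : 'I_n by exists 0%N.
have [y yn0] : exists y, phi i0 y != 0.
  apply: contrapT => H; apply: (nz i0); apply: funext => y.
  by apply: contrapT => /eqP Hy; apply: H; exists y.
set M := \sum_i `|phi i y|.
have M0 : 0 <= M by apply: sumr_ge0 => i _; exact: normr_ge0.
have M1 : 0 < M + 1 by apply: ltr_wpDl.
set t := eps / (M + 1).
have t0 : 0 < t by apply: divr_gt0.
have Ax : A (t *: y).
  move=> i; rewrite -[t *: y]addr0 philin phi0 addr0 normrM (gtr0_norm t0).
  apply: (@le_lt_trans _ _ (t * M)).
    apply: ler_wpM2l; first exact: ltW.
    rewrite /M (bigD1 i) //= lerDl.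
    by apply: sumr_ge0 => j _; exact: normr_ge0.
  have -> : eps = t * (M + 1) by rewrite /t divfK // gt_eqF.
  by rewrite ltr_pM2l // ltrDl.
have noW : forall W : set X, lsubspace W -> W (t *: y) -> ~ (W `<=` A `|` [set 0]).
  move=> W WL Wx WA.
  have tyn : phi i0 (t *: y) != 0.
    by rewrite -[t *: y]addr0 philin phi0 addr0 mulf_neq0 // gt_eqF.
  have Wz := sub_scale (eps / phi i0 (t *: y)) WL Wx.
  have pz : phi i0 ((eps / phi i0 (t *: y)) *: (t *: y)) = eps.
    by rewrite -[_ *: (t *: y)]addr0 philin phi0 addr0 divfK.
  case: (WA _ Wz) => [Az|z0].
    by have := Az i0; rewrite pz gtr0_norm // ltxx.
  by move: pz; rewrite z0 phi0 => /eqP; rewrite eq_sym gt_eqF.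
split; first by exists (t *: y); split.
split.
  move=> H; have [W [WL [_ [Wx WA]]]] := H _ Ax; exact: noW WL Wx WA.
move=> H; have [W [WL [_ [_ [Wx WA]]]]] := H _ Ax; exact: noW WL Wx WA.
Qed.
End Main.

Theorem mainTheorem4 (R : realType) :
  (forall X : completeNormedModType R, thm4_stmt X) /\
  (forall X : completeNormedModType R[i], thm4_stmt X).
Proof. by split => X; exact: thm4_gen. Qed.
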